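(* Let $\epsilon>0$, $n\ge1$, $s=\sqrt{e^\epsilon}$, let $\mathbf{w}\in\mathbb{R}^d$ be non-increasing, $c\in\mathbb{R}$, and $\mathbf{m}$ with $m_j\ge0$, $\sum_jm_j=1$. Let $J=\{j: m_j>0\}$ and for $j\in J$ put $K_j=\frac{w_j-c}{m_j}$, $t_j=\big|\frac{s}{s-1}K_j+c\big|$, $f_j=\big|\frac{-1}{s-1}K_j+c\big|$, and for $b\in\{0,1\}$, $g_{j,b}=\frac{bs-(1-b)}{s-1}K_j$. For the weighted sampling mechanism with parameters $(\epsilon,\mathbf{w},\mathbf{m},c)$: $$\mathrm{risk}_{\mathrm{MM}}=\frac dn\max_{j\in J}\max(f_j,t_j),\qquad \mathrm{risk}_{\mathrm{EM}}=\frac{\sum_{j\in J}m_j\big[(s+d-1)t_j+(s(d-1)+1)f_j\big]}{n(s+1)}\ \text{(for every input vote)},$$ $$\mathrm{risk}_{\mathrm{DD}}=d\Big(\max_{j\in J,\,b\in\{0,1\}}g_{j,b}-\min_{j\in J,\,b\in\{0,1\}}g_{j,b}\Big).$$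
   Context: Candidates are $A_1,\dots,A_d$; a vote $\pi$ is a linear ordering, $\pi_j$ the index of the candidate at rank $j$; the scored vote is $v$ with $v_{\pi_j}=w_j$. The weighted sampling mechanism on input $\pi$: (1) samples a rank $j^*$ with $\Pr[j^*=j]=m_j$, independently of $\pi$; (2) sets $B\in\{0,1\}^d$ with $B_{\pi_{j^*}}=1$, other entries $0$; (3) independently for each $k$, sets $\tilde B_k=1-B_k$ with probability $\frac1{s+1}$, else $\tilde B_k=B_k$; (4) outputs $\tilde v_k=\frac{(s+1)\tilde B_k-1}{s-1}\cdot\frac{w_{j^*}-c}{m_{j^*}}+c$. Let $\mathcal{D}_{\tilde v}$ be the set of all possible outputs (over all inputs and all randomness), $n$ the number of voters. Risk metrics: $\mathrm{risk}_{\mathrm{MM}}=\max_{\tilde v\in\mathcal{D}_{\tilde v}}\frac{|\tilde v|_1}{n}$; $\mathrm{risk}_{\mathrm{EM}}=\mathbb{E}[\frac{|\tilde v|_1}{n}]$ over the mechanism's randomness for a given input; $\mathrm{risk}_{\mathrm{DD}}=\max_{\tilde v,\tilde v'\in\mathcal{D}_{\tilde v}}|\tilde v-\tilde v'|_1$. *)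

(* Defs.v *)
From HB Require Import structures.
From mathcomp Require Import all_boot all_order all_algebra perm.
From mathcomp Require Import reals sequences exp.
Set Implicit Arguments. Unset Strict Implicit. Unset Printing Implicit Defensive.
Import Order.TTheory GRing.Theory Num.Theory.
Local Open Scope ring_scope.

Section WS.
Variables (R : realType) (d : nat).

Definition is_max (S : R -> Prop) (x : R) := S x /\ forall y, S y -> y <= x.
Definition is_min (S : R -> Prop) (x : R) := S x /\ forall y, S y -> x <= y.

Definition sparam (eps : R) : R := Num.sqrt (expR eps).

Definition l1 (v : 'I_d -> R) : R := \sum_k `|v k|.

Variables (eps : R) (w m : 'I_d -> R) (c : R).
Let s := sparam eps.

(* Ranks and candidates are both indexed by 'I_d; a vote pi maps rank j to
   candidate pi j. An outcome of the mechanism is (j*, B~). *)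

(* probability that coordinate with true bit b is reported as bt *)
Definition flipprob (b bt : bool) : R :=
  if bt == b then s / (s + 1) else 1 / (s + 1).

(* probability of outcome (j, Bt) on input vote pi; B_k = (k == pi j) *)
Definition outprob (pi : {perm 'I_d}) (j : 'I_d) (Bt : {ffun 'I_d -> bool}) : R :=
  m j * \prod_k flipprob (k == pi j) (Bt k).

Definition output (j : 'I_d) (Bt : {ffun 'I_d -> bool}) : 'I_d -> R :=
  fun k => ((s + 1) * (nat_of_bool (Bt k))%:R - 1) / (s - 1) * ((w j - c) / m j) + c.

Definition possible_output (v : 'I_d -> R) : Prop :=
  exists pi j Bt, 0 < outprob pi j Bt /\ v = output j Bt.

(* risk_MM is the maximum of this set *)
Definition riskMM_set (n : nat) (x : R) : Prop :=
  exists v, possible_output v /\ x = l1 v / n%:R.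

Definition riskEM (n : nat) (pi : {perm 'I_d}) : R :=
  \sum_j \sum_(Bt : {ffun 'I_d -> bool}) outprob pi j Bt * (l1 (output j Bt) / n%:R).

(* risk_DD is the maximum of this set *)
Definition riskDD_set (x : R) : Prop :=
  exists v v', possible_output v /\ possible_output v' /\ x = l1 (fun k => v k - v' k).

Definition Kj (j : 'I_d) : R := (w j - c) / m j.
Definition tj (j : 'I_d) : R := `| s / (s - 1) * Kj j + c |.
Definition fj (j : 'I_d) : R := `| (-1) / (s - 1) * Kj j + c |.
Definition gjb (j : 'I_d) (b : bool) : R :=
  ((nat_of_bool b)%:R * s - (1 - (nat_of_bool b)%:R)) / (s - 1) * Kj j.

End WS.

(* Main.v *)
Require Import Defs.
From HB Require Import structures.
From mathcomp Require Import all_boot all_order all_algebra perm.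
From mathcomp Require Import reals sequences exp.
From mathcomp Require Import ring lra.
Import Order.TTheory GRing.Theory Num.Theory.
Local Open Scope ring_scope.

Lemma s_gt1 (R : realType) (eps : R) : 0 < eps -> 1 < sparam eps.
Proof.
move=> he; rewrite /sparam -sqrtr1 ltr_sqrt ?expR_gt0 //.
exact: pexpR_gt1.
Qed.

Lemma output_abs (R : realType) (eps : R) d (w m : 'I_d -> R) c j Bt k :
  `|output eps w m c j Bt k| = if Bt k then tj eps w m c j else fj eps w m c j.
Proof.
rewrite /output /tj /fj /Kj; case: (Bt k) => /=.
  by rewrite mulr1 addrK.
by rewrite mulr0 sub0r.
Qed.

Lemma output_g (R : realType) (eps : R) d (w m : 'I_d -> R) c j Bt k :
  output eps w m c j Bt k = gjb eps w m c j (Bt k) + c.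
Proof.
rewrite /output /gjb /Kj; case: (Bt k) => /=.
  by rewrite mulr1 addrK mul1r subrr subr0.
by rewrite mulr0 sub0r mul0r subr0 sub0r.
Qed.

Lemma outprob_pos (R : realType) (eps : R) d (w m : 'I_d -> R) pi j Bt :
  0 < eps -> 0 <= m j -> (0 < outprob eps m pi j Bt) = (0 < m j).
Proof.
move=> he hm; have s1 := @s_gt1 R eps he.
have hp : 0 < \prod_k flipprob eps (k == pi j) (Bt k).
  apply: prodr_gt0 => k _; rewrite /flipprob; case: ifP => _.
    apply: divr_gt0; lra.
  apply: divr_gt0; lra.
rewrite /outprob pmulr_lgt0 //.
Qed.

Lemma expect_lemma (R : realType) (I : finType) (p h : I -> bool -> R) :
  (forall k, p k true + p k false = 1) ->
  \sum_(F : {ffun I -> bool}) (\prod_k p k (F k)) * (\sum_k h k (F k)) =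
  \sum_k (p k true * h k true + p k false * h k false).
Proof.
move=> hp.
under eq_bigr do rewrite mulr_sumr.
rewrite exchange_big /=; apply: eq_bigr => k _.
pose q i b := if i == k then p i b * h i b else p i b.
transitivity (\sum_(F : {ffun I -> bool}) \prod_i q i (F i)).
  apply: eq_bigr => F _.
  rewrite (bigD1 k) //= [in RHS](bigD1 k) //= /q eqxx mulrAC; congr (_ * _).
  by apply: eq_bigr => i /negbTE ->.
rewrite -bigA_distr_bigA /= (bigD1 k) //= big_bool /q eqxx.
rewrite big1 ?mulr1 // => i /negbTE ->; by rewrite big_bool /= hp.
Qed.

Theorem lemma10p1 (R : realType) (eps : R) (n d : nat) (w m : 'I_d -> R) (c : R) :
  0 < eps -> (1 <= n)%N ->
  (forall i j : 'I_d, (i <= j)%N -> w j <= w i) ->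
  (forall j, 0 <= m j) -> \sum_j m j = 1 ->
  (* risk_MM *)
  (forall M : R,
     is_max (fun x => exists j, 0 < m j /\ x = Num.max (fj eps w m c j) (tj eps w m c j)) M ->
     is_max (riskMM_set eps w m c n) (d%:R / n%:R * M)) /\
  (* risk_EM, for every input vote *)
  (forall pi : {perm 'I_d},
     riskEM eps w m c n pi =
     (\sum_(j | 0 < m j)
        m j * ((sparam eps + d%:R - 1) * tj eps w m c j
               + (sparam eps * (d%:R - 1) + 1) * fj eps w m c j))
     / (n%:R * (sparam eps + 1))) /\
  (* risk_DD *)
  (forall gmax gmin : R,
     is_max (fun x => exists j b, 0 < m j /\ x = gjb eps w m c j b) gmax ->
     is_min (fun x => exists j b, 0 < m j /\ x = gjb eps w m c j b) gmin ->
     is_max (riskDD_set eps w m c) (d%:R * (gmax - gmin))).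
Proof.
move=> he hn _ hm _.
have s1 := @s_gt1 R eps he.
have hn0 : n%:R != 0 :> R by rewrite pnatr_eq0 -lt0n.
have hpos : forall pi j Bt, 0 < outprob eps m pi j Bt -> 0 < m j.
  by move=> pi j Bt; rewrite outprob_pos.
split.
  move=> M [[j [hj ->]] HM]; split.
    exists (output eps w m c j [ffun _ => fj eps w m c j < tj eps w m c j]); split.
      exists 1%g, j, [ffun _ => fj eps w m c j < tj eps w m c j].
      by rewrite outprob_pos.
    rewrite /l1 (eq_bigr (fun=> Num.max (fj eps w m c j) (tj eps w m c j))) => [|k _]; last first.
      by rewrite output_abs ffunE.
    by rewrite sumr_const card_ord mulrAC mulr_natl.
  move=> y [v [[pi [j' [Bt [hp ->]]]] ->]].
  have hj' := hpos _ _ _ hp.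
  rewrite mulrAC ler_wpM2r ?invr_ge0 ?ler0n //.
  apply: (@le_trans _ _ (\sum_(k : 'I_d) Num.max (fj eps w m c j') (tj eps w m c j'))).
    apply: ler_sum => k _; rewrite output_abs; case: (Bt k).
      by rewrite le_max lexx orbT.
    by rewrite le_max lexx.
  set MM := Num.max (fj eps w m c j) (tj eps w m c j).
  have -> : d%:R * MM = \sum_(k : 'I_d) MM by rewrite sumr_const card_ord mulr_natl.
  apply: ler_sum => k _; apply: HM; by exists j'.
have hs1 : sparam eps + 1 != 0 by apply: lt0r_neq0; lra.
split.
  move=> pi.
  rewrite /riskEM [in RHS]big_mkcond [in RHS]mulr_suml /=; apply: eq_bigr => j _.
  case: ifP => hj; last first.
    have mj0 : m j = 0 by apply/eqP; move: hj; rewrite lt0r hm andbT => /negbFE.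
    by rewrite mul0r big1 // => Bt _; rewrite /outprob mj0 !mul0r.
  have hd : (0 < d)%N by apply: leq_ltn_trans (leq0n _) (ltn_ord (pi j)).
  pose p k b := flipprob eps (k == pi j) b.
  pose h (k : 'I_d) (b : bool) := if b then tj eps w m c j else fj eps w m c j.
  transitivity (m j / n%:R * \sum_(Bt : {ffun 'I_d -> bool}) (\prod_k p k (Bt k)) * \sum_k h k (Bt k)).
    rewrite mulr_sumr; apply: eq_bigr => Bt _.
    have -> : l1 (output eps w m c j Bt) = \sum_k h k (Bt k).
      by apply: eq_bigr => k _; rewrite output_abs.
    rewrite /outprob /p; ring.
  rewrite expect_lemma; last first.
    move=> k; rewrite /p /flipprob /=; by case: (k == pi j) => /=; field.
  rewrite (bigD1 (pi j)) //= /p /h /flipprob eqxx /=.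
  rewrite (eq_bigr (fun _ => 1/(sparam eps + 1) * tj eps w m c j + sparam eps/(sparam eps + 1) * fj eps w m c j)) => [|k /negbTE ->] //.
  rewrite sumr_const.
  have -> : #|(fun i : 'I_d => i != pi j)| = d.-1.
    by rewrite -[in RHS](card_ord d) -(cardC1 (pi j)); apply: eq_card.
  have hdR : d%:R = (d.-1)%:R + 1 :> R by rewrite natr1 prednK.
  rewrite -mulr_natr hdR; field.
  by apply/andP; split.
move=> gmax gmin [[j1 [b1 [h1 E1]]] Hmax] [[j2 [b2 [h2 E2]]] Hmin]; split.
  exists (output eps w m c j1 [ffun=> b1]), (output eps w m c j2 [ffun=> b2]).
  split; first by exists 1%g, j1, [ffun=> b1]; rewrite outprob_pos.
  split; first by exists 1%g, j2, [ffun=> b2]; rewrite outprob_pos.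
  have hle : gmin <= gmax.
    by rewrite E1; apply: Hmin; exists j1, b1.
  rewrite /l1 (eq_bigr (fun=> gmax - gmin)) => [|k _]; last first.
    rewrite !output_g !ffunE -E1 -E2 ger0_norm; first ring.
    rewrite subr_ge0; lra.
  by rewrite sumr_const card_ord mulr_natl.
move=> y [v [v' [[pi [j [Bt [hp ->]]]] [[pi' [j' [Bt' [hp' ->]]]] ->]]]].
have hj := hpos _ _ _ hp; have hj' := hpos _ _ _ hp'.
rewrite /l1; apply: (@le_trans _ _ (\sum_(k : 'I_d) (gmax - gmin))).
  apply: ler_sum => k _; rewrite !output_g.
  have a1 : gjb eps w m c j (Bt k) <= gmax by apply: Hmax; exists j, (Bt k).
  have a2 : gjb eps w m c j' (Bt' k) <= gmax by apply: Hmax; exists j', (Bt' k).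
  have a3 : gmin <= gjb eps w m c j (Bt k) by apply: Hmin; exists j, (Bt k).
  have a4 : gmin <= gjb eps w m c j' (Bt' k) by apply: Hmin; exists j', (Bt' k).
  rewrite ler_norml; apply/andP; split; lra.
by rewrite sumr_const card_ord mulr_natl.
Qed.
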